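(* Let $\mathcal{R}$ be a tolerance relation on $X=\{1,\dots,n\}$ with chordal graph $G(\mathcal{R})$, and let $C$ be a maximal clique of $G(\mathcal{R})$. Let $F=\{(x_{ij})\in E(\mathcal{R})\mid x_{ij}=0\text{ unless }i,j\in C\}\subseteq E(\mathcal{R})^d$, equipped with the matrix order inherited from $E(\mathcal{R})^d$. Then the canonical linear identification $F\cong M_{|C|}(\mathbb{C})$, $(x_{ij})\mapsto (x_{ij})_{i,j\in C}$, is a complete order isomorphism (in particular $C^*_{\mathrm{env}}(F)=M_{|C|}(\mathbb{C})$).
   Context: A tolerance relation on $X=\{1,\dots,n\}$ is a reflexive symmetric relation $\mathcal{R}\subseteq X\times X$; its graph $G(\mathcal{R})$ has vertex set $X$ and an edge between distinct $i,j$ iff $(i,j)\in\mathcal{R}$. A graph is chordal if every cycle of length at least 4 has a chord. $E(\mathcal{R})=\{(x_{ij})\in M_n(\mathbb{C})\mid x_{ij}=0\text{ if }(i,j)\notin\mathcal{R}\}$. The dual $E(\mathcal{R})^d$ is identified with $E(\mathcal{R})$ with matrix order $M_m(E(\mathcal{R})^d)_+=\{M\in M_m(E(\mathcal{R}))\mid\exists N\in M_m(E(\mathcal{R})^\perp),\ M+N\in M_{mn}(\mathbb{C})_+\}$, $E(\mathcal{R})^\perp=\{y\in M_n(\mathbb{C})\mid y_{ij}=0\ \forall(i,j)\in\mathcal{R}\}$. *)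

(* Defs.v *)
From mathcomp Require Import all_boot all_order all_algebra all_field.
Set Implicit Arguments. Unset Strict Implicit. Unset Printing Implicit Defensive.
Import Order.TTheory GRing.Theory Num.Theory.
Local Open Scope ring_scope.

Definition psd (I : finType) (A : I -> I -> algC) : Prop :=
  forall v : I -> algC, 0 <= \sum_i \sum_j (v i)^* * A i j * v j.

Definition adj (n : nat) (R : rel 'I_n) : rel 'I_n :=
  fun i j => (i != j) && R i j.

Definition chordal (n : nat) (R : rel 'I_n) : Prop :=
  forall s : seq 'I_n, uniq s -> (4 <= size s)%N -> cycle (adj R) s ->
    exists x y, [/\ x \in s, y \in s, adj R x y, y != next s x & x != next s y].

Definition clique (n : nat) (R : rel 'I_n) (C : {set 'I_n}) : Prop :=
  forall i j, i \in C -> j \in C -> i != j -> adj R i j.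

Definition maximal_clique (n : nat) (R : rel 'I_n) (C : {set 'I_n}) : Prop :=
  clique R C /\ forall D : {set 'I_n}, clique R D -> C \subset D -> D = C.

Definition inE (n : nat) (R : rel 'I_n) (x : 'M[algC]_n) : Prop :=
  forall i j, ~~ R i j -> x i j = 0.
Definition inEperp (n : nat) (R : rel 'I_n) (y : 'M[algC]_n) : Prop :=
  forall i j, R i j -> y i j = 0.
Definition inF (n : nat) (R : rel 'I_n) (C : {set 'I_n}) (x : 'M[algC]_n) : Prop :=
  inE R x /\ forall i j, ~~ ((i \in C) && (j \in C)) -> x i j = 0.

(* An m x m matrix of n x n matrices, viewed as an (mn) x (mn) matrix
   indexed by 'I_m * 'I_n. *)
Definition flat (m k : nat) (M : 'I_m -> 'I_m -> 'M[algC]_k)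
  : ('I_m * 'I_k)%type -> ('I_m * 'I_k)%type -> algC :=
  fun p q => M p.1 q.1 p.2 q.2.

Definition dual_pos (n : nat) (R : rel 'I_n) (m : nat)
  (M : 'I_m -> 'I_m -> 'M[algC]_n) : Prop :=
  (forall a b, inE R (M a b)) /\
  exists N : 'I_m -> 'I_m -> 'M[algC]_n,
    (forall a b, inEperp R (N a b)) /\ psd (flat (fun a b => M a b + N a b)).

Definition F_pos (n : nat) (R : rel 'I_n) (C : {set 'I_n}) (m : nat)
  (M : 'I_m -> 'I_m -> 'M[algC]_n) : Prop :=
  (forall a b, inF R C (M a b)) /\ @dual_pos n R m M.

Definition restrictC (n : nat) (C : {set 'I_n}) (x : 'M[algC]_n) : 'M[algC]_#|C| :=
  \matrix_(a, b) x (enum_val a) (enum_val b).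

(* Main.v *)
Require Import Defs.
From mathcomp Require Import all_boot all_order all_algebra all_field.
Import Order.TTheory GRing.Theory Num.Theory.
Local Open Scope ring_scope.

Lemma sumC (n m : nat) (C : {set 'I_n}) (g : ('I_m * 'I_n)%type -> algC)
  (Hg : forall p, p.2 \notin C -> g p = 0) :
  \sum_(p : ('I_m * 'I_n)%type) g p =
  \sum_(q : ('I_m * 'I_#|C|)%type) g (q.1, enum_val q.2).
Proof.
rewrite (eq_bigr (fun p => g (p.1, p.2))); last by case.
rewrite -(pair_bigA _ (fun a j => g (a, j))) /=.
rewrite -(pair_bigA _ (fun a (k : 'I_#|C|) => g (a, enum_val k))) /=.
apply: eq_bigr => a _.
rewrite (bigID (mem C)) /= [X in _ + X]big1 ?addr0; last first.
  by move=> j Hj; apply: (Hg (a, j)).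
by rewrite (big_enum_val (fun j => g (a, j))).
Qed.

Lemma reduce (n m : nat) (C : {set 'I_n})
  (A : ('I_m * 'I_n)%type -> ('I_m * 'I_n)%type -> algC) (w : ('I_m * 'I_n)%type -> algC)
  (H : forall p q, (p.2 \notin C) || (q.2 \notin C) -> (w p)^* * A p q * w q = 0) :
  \sum_p \sum_q (w p)^* * A p q * w q =
  \sum_(p : ('I_m * 'I_#|C|)%type) \sum_(q : ('I_m * 'I_#|C|)%type)
     (w (p.1, enum_val p.2))^* * A (p.1, enum_val p.2) (q.1, enum_val q.2)
       * w (q.1, enum_val q.2).
Proof.
rewrite (@sumC _ _ C); last first.
  by move=> p Hp; apply: big1 => q _; apply: H; rewrite Hp.
apply: eq_bigr => p _; rewrite (@sumC _ _ C) //.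
by move=> q Hq; apply: H; rewrite Hq orbT.
Qed.

Theorem mainTheorem7 (n : nat) (R : rel 'I_n)
  (Rrefl : reflexive R) (Rsym : symmetric R) (Rchordal : chordal R)
  (C : {set 'I_n}) (HC : maximal_clique R C) :
  (* restrictC is a linear bijection F -> M_{|C|}(C) ... *)
  (forall (a : algC) (x y : 'M[algC]_n),
      restrictC C (a *: x + y) = a *: restrictC C x + restrictC C y) /\
  (forall x y : 'M[algC]_n, inF R C x -> inF R C y ->
      restrictC C x = restrictC C y -> x = y) /\
  (forall Y : 'M[algC]_#|C|, exists x : 'M[algC]_n, inF R C x /\ restrictC C x = Y) /\
  (* ... and a complete order isomorphism *)
  (forall (m : nat) (M : 'I_m -> 'I_m -> 'M[algC]_n),
      (forall a b, inF R C (M a b)) ->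
      (@F_pos n R C m M <-> psd (flat (fun a b => restrictC C (M a b))))).
Proof.
have RC : forall i j, i \in C -> j \in C -> R i j.
  move=> i j Hi Hj; case: (eqVneq i j) => [->|ne]; first exact: Rrefl.
  by have /andP[] := HC.1 i j Hi Hj ne.
split.
  by move=> a x y; apply/matrixP => i j; rewrite !mxE.
split.
  move=> x y [_ Hx] [_ Hy] E; apply/matrixP => i j.
  case: (boolP ((i \in C) && (j \in C))) => [/andP[Hi Hj]|Hn]; last by rewrite Hx // Hy.
  have := congr1 (fun X : 'M[algC]_#|C| => X (enum_rank_in Hi i) (enum_rank_in Hj j)) E.
  by rewrite /= !mxE !enum_rankK_in.
split.
  move=> Y.
  exists (\matrix_(i, j) \sum_(a | enum_val a == i) \sum_(b | enum_val b == j) Y a b).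
  split; first split.
  - move=> i j Hij; rewrite mxE; apply: big1 => a /eqP Ha; apply: big1 => b /eqP Hb.
    by move: Hij; rewrite -Ha -Hb RC // enum_valP.
  - move=> i j Hij; rewrite mxE; apply: big1 => a /eqP Ha; apply: big1 => b /eqP Hb.
    by move: Hij; rewrite -Ha -Hb !enum_valP.
  apply/matrixP => a b; rewrite !mxE.
  rewrite (big_pred1 a); last by move=> k; rewrite /= (inj_eq enum_val_inj).
  by rewrite (big_pred1 b) //; move=> k; rewrite /= (inj_eq enum_val_inj).
move=> m M HM; split.
  case=> _ [_ [N [HN Hpsd]]] v.
  pose w := fun p : ('I_m * 'I_n)%type =>
    \sum_(k : 'I_#|C| | enum_val k == p.2) v (p.1, k).
  have wE : forall a k, w (a, enum_val k) = v (a, k).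
    move=> a k; rewrite /w /= (big_pred1 k) //.
    by move=> k'; rewrite /= (inj_eq enum_val_inj).
  have w0 : forall p, p.2 \notin C -> w p = 0.
    move=> p Hp; apply: big1 => k /eqP Hk; by move: Hp; rewrite -Hk enum_valP.
  have := Hpsd w; rewrite (@reduce _ _ C); last first.
    move=> p q /orP[] H; first by rewrite w0 // conjC0 !mul0r.
    by rewrite (w0 q) // mulr0.
  congr (_ <= _); apply: eq_bigr => p _; apply: eq_bigr => q _.
  rewrite /flat /= !wE !mxE.
  case: p q => a i [b j] /=.
  by rewrite (HN a b) ?addr0 // RC // enum_valP.
move=> Hpsd; split => //; split; first by move=> a b; case: (HM a b).
exists (fun _ _ => 0); split; first by move=> a b i j _; rewrite mxE.
move=> w; rewrite (@reduce _ _ C); last first.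
  move=> [a i] [b j] /= H; rewrite /flat /= addr0.
  have [_ Z] := HM a b; rewrite Z ?mulr0 ?mul0r //.
  by move: H; rewrite negb_and.
have := Hpsd (fun q => w (q.1, enum_val q.2)).
congr (_ <= _); apply: eq_bigr => p _; apply: eq_bigr => q _.
by rewrite /flat /= addr0 !mxE.
Qed.
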